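(* Let $v$, $V$ be as in the context, $f=v-V$, and assume $(H1')_\delta$ with $0<\delta<1/(2p)$. Then there is a constant $\overline{c}_p>0$ depending only on $p$ such that for all $t\ge t_0$ $$\frac{p+1}{2(1+\overline c_p\delta)^2}\,\mathsf{E}[f(t)]\le\mathcal{E}[v(t)]\le\frac{p+1}{2}(1+\overline c_p\delta)^2\,\mathsf{E}[f(t)].$$
   Context: Let $N\ge1$, let $\Omega\subset\mathbb{R}^N$ be a bounded domain with $C^{2,\alpha}$ boundary, $m\in(\frac{(N-2)_+}{N+2},1)$, $p=1/m$. Let $u\ge0$ solve $u_\tau=\Delta u^m$ in $(0,\infty)\times\Omega$, $u=0$ on $\partial\Omega$, $u(0)=u_0$ with $0\le u_0\in L^q(\Omega)$, $q\ge1$, $q>N(1-m)/2$ if $m<(N-2)/N$; $T>0$ its extinction time, $\mathsf{c}=\frac{1}{(1-m)T}$, $w(t,x)=e^{\mathsf{c}t}u(T-Te^{-t/T},x)$, $v=w^m$ (so $\partial_tv^p=\Delta v+\mathsf{c}v^p$, $v=0$ on $\partial\Omega$). $S$ is the positive classical solution of $-\Delta S^m=\mathsf{c}S$, $S=0$ on $\partial\Omega$, with $w(t)\to S$ uniformly; $V=S^m$. $(H1')_\delta$: there is $t_0$ with $|v-V|\le\delta V$ a.e. on $[t_0,\infty)\times\Omega$. $\mathsf{E}[f]=\int_\Omega f^2V^{p-1}dx$ and $\mathcal{E}[v]=\int_\Omega[(v^{p+1}-V^{p+1})-\frac{p+1}{p}(v^p-V^p)V]dx$. *)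

(* Defs.v *)
From HB Require Import structures.
From mathcomp Require Import all_boot all_order all_algebra.
From mathcomp Require Import all_classical all_reals all_analysis.
Set Implicit Arguments. Unset Strict Implicit. Unset Printing Implicit Defensive.
Import Order.TTheory GRing.Theory Num.Theory.
Import numFieldNormedType.Exports.
Local Open Scope classical_set_scope.
Local Open Scope ring_scope.

Definition Enorm {R : realType} {d : measure_display} {T : measurableType d}
  (mu : {measure set T -> \bar R}) (Omega : set T) (p : R) (V f : T -> R) : \bar R :=
  (\int[mu]_(x in Omega) ((f x) ^+ 2 * (V x) `^ (p - 1))%:E)%E.

Definition Ecal {R : realType} {d : measure_display} {T : measurableType d}
  (mu : {measure set T -> \bar R}) (Omega : set T) (p : R) (V v : T -> R) : \bar R :=
  (\int[mu]_(x in Omega)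
     (((v x) `^ (p + 1) - (V x) `^ (p + 1))
      - (p + 1) / p * ((v x) `^ p - (V x) `^ p) * V x)%:E)%E.

(* Main.v *)
Require Import Defs.
From HB Require Import structures.
From mathcomp Require Import all_boot all_order all_algebra.
From mathcomp Require Import all_classical all_reals all_analysis.
From mathcomp Require Import ring lra.
From mathcomp Require Import measurable_realfun.
Import Order.TTheory GRing.Theory Num.Theory.
Import numFieldNormedType.Exports.
Local Open Scope classical_set_scope.
Local Open Scope ring_scope.

Definition GG {R : realType} (p k : R) : R -> R :=
  (fun y : R => y `^ (p+1)) - ((p+1)/p) \*: (fun y : R => y `^ p) - k \*: ((id - cst 1) * (id - cst 1)).
Lemma dG {R : realType} (p k x : R) : 0 < p -> 0 < x -> is_derive x 1 (GG p k)
  ((x - 1) * ((p + 1) * x `^ (p - 1) - 2 * k)).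
Proof.
move=> p0 x0.
have h1 := is_derive1_powR (p+1) x0.
have h2 := is_deriveZ ((p+1)/p) (is_derive1_powR p x0).
have h3 : is_derive x 1 (id - cst 1 : R -> R) (1 - 0).
  apply: is_deriveB.
have h4 := is_deriveM h3 h3.
have := is_deriveB (is_deriveB h1 h2) (is_deriveZ k h4).
move=> H; apply: is_derive_eq H _.
rewrite /= subr0 !scaler1 /= /GRing.scale /=.
have -> : p + 1 - 1 = p by ring.
rewrite -(mulr_powRB1 (ltW x0) p0).
have e : (p + 1) / p * p = p + 1 by rewrite mulfVK // gt_eqF.
have -> : (p + 1) / p * (p * x `^ (p - 1)) = (p+1) * x `^ (p - 1).
  by rewrite mulrA e.
change ((id - cst 1) x) with (x - 1).
ring.
Qed.
Lemma GGmvt {R : realType} (p k lo hi : R) : 0 < p -> 0 < lo -> lo <= hi ->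
  exists2 c, lo <= c <= hi &
  GG p k hi - GG p k lo = ((c - 1) * ((p + 1) * c `^ (p - 1) - 2 * k)) * (hi - lo).
Proof.
move=> p0 lo0 lh.
have der : forall x, lo <= x -> is_derive x 1 (GG p k) ((x - 1) * ((p + 1) * x `^ (p - 1) - 2 * k)).
  by move=> x lx; apply: dG => //; exact: lt_le_trans lx.
have d1 : forall x, x \in `]lo, hi[ -> is_derive x 1 (GG p k) ((x - 1) * ((p + 1) * x `^ (p - 1) - 2 * k)).
  by move=> x; rewrite in_itv /= => /andP[/ltW lx _]; exact: der.
have c1 : {within `[lo, hi], continuous (GG p k)}.
  apply: derivable_within_continuous => x; rewrite in_itv /= => /andP[lx _].
  by have := der x lx; case.
have [c cI ->] := MVT_segment lh d1 c1.
by exists c => //; move: cI; rewrite in_itv.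
Qed.

Lemma GGE {R : realType} (p k y : R) : GG p k y = y `^ (p+1) - (p+1)/p * y `^ p - k * ((y - 1) * (y - 1)).
Proof. by []. Qed.

Lemma hcore {R : realType} (p k a d : R) : 1 < p -> 0 < a -> 0 <= d -> 1 - d <= a <= 1 + d ->
  exists c, [/\ 0 < c, 1 - d <= c <= 1 + d, (a - 1) * (c - 1) >= 0 &
  a `^ (p+1) - 1 - (p+1)/p * (a `^ p - 1) - k * (a - 1) ^+ 2 =
  (a - 1) * (c - 1) * ((p + 1) * c `^ (p - 1) - 2 * k)].
Proof.
move=> p1 a0 d0 /andP[ad1 ad2]; have p0 : 0 < p by apply: lt_trans p1.
have G1 : GG p k 1 = 1 - (p+1)/p by rewrite GGE !powR1 subrr; ring.
have hE : a `^ (p+1) - 1 - (p+1)/p * (a `^ p - 1) - k * (a - 1) ^+ 2 = GG p k a - GG p k 1.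
  by rewrite G1 GGE expr2; ring.
rewrite hE.
have [a1|a1] := leP 1 a.
  have [c /andP[c1 ca] ->] := GGmvt p k 1 a p0 ltr01 a1.
  exists c; split.
  - exact: lt_le_trans c1.
  - apply/andP; split; lra.
  - by rewrite mulr_ge0 // subr_ge0.
  - ring.
have [c /andP[c1 ca] E] := GGmvt p k a 1 p0 a0 (ltW a1).
exists c; split.
- exact: lt_le_trans c1.
- apply/andP; split; lra.
- by rewrite mulr_le0 // subr_le0 // ltW.
- have -> : GG p k a - GG p k 1 = - (GG p k 1 - GG p k a) by ring.
  rewrite E; ring.
Qed.
Lemma expR_le12 {R : realType} {x : R} : 0 <= x -> x <= 1/2 -> expR x <= 1 + 2 * x.
Proof.
move=> x0 x1.
have e1 := expR_ge1Dx (- x).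
have e2 : expR x * expR (- x) = 1 by rewrite -expRD subrr expR0.
have e3 := expR_gt0 x.
have e4 := expR_gt0 (- x).
nra.
Qed.

Lemma expRN_le {R : realType} {d : R} : 0 <= d -> d <= 1/2 -> expR (- (2 * d)) <= 1 - d.
Proof.
move=> d0 d1.
have e1 := expR_ge1Dx (2 * d).
have e2 : expR (2 * d) * expR (- (2 * d)) = 1 by rewrite -expRD subrr expR0.
have e3 := expR_gt0 (2 * d).
have e4 := expR_gt0 (- (2 * d)).
nra.
Qed.

Lemma lnc_bounds {R : realType} {d c : R} : 0 <= d -> d <= 1/2 -> 1 - d <= c <= 1 + d ->
  - (2 * d) <= ln c <= d.
Proof.
move=> d0 d1 /andP[c1 c2].
have c0 : 0 < c by lra.
apply/andP; split.
  rewrite -ler_expR lnK ?posrE //.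
  exact: le_trans (expRN_le d0 d1) c1.
rewrite -ler_expR lnK ?posrE //.
apply: le_trans c2 _; exact: expR_ge1Dx.
Qed.

Lemma pow_bounds {R : realType} {p d c : R} : 1 < p -> 0 < d -> 2 * p * d < 1 -> 1 - d <= c <= 1 + d ->
  c `^ (p - 1) <= (1 + 2 * p * d) ^+ 2 /\ 1 <= c `^ (p - 1) * (1 + 2 * p * d) ^+ 2.
Proof.
move=> p1 d0 pd cI.
have d12 : d <= 1/2 by nra.
have c0 : 0 < c by move: cI => /andP[? ?]; lra.
have /andP[l1 l2] := lnc_bounds (ltW d0) d12 cI.
have x0 : 0 <= (p - 1) * d by apply: mulr_ge0; lra.
have x1 : (p - 1) * d <= 1/2 by nra.
have E := expR_le12 x0 x1.
have Epos := expR_gt0 ((p - 1) * d).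
rewrite /powR gt_eqF //.
split.
  apply: (@le_trans _ _ (expR ((p - 1) * d))).
    by rewrite ler_expR ler_wpM2l // subr_ge0 ltW.
  nra.
apply: (@le_trans _ _ (expR (- (2 * ((p - 1) * d))) * expR ((p - 1) * d) ^+ 2)).
  rewrite -expRM_natr -expRD.
  have -> : - (2 * ((p - 1) * d)) + (p - 1) * d * 2%:R = 0 by rewrite -[2%:R]/2; ring.
  by rewrite expR0.
apply: ler_pM.
- exact: ltW (expR_gt0 _).
- by rewrite exprn_ge0 // ltW.
- rewrite ler_expR.
  have : (p - 1) * (- (2 * d)) <= (p - 1) * ln c by rewrite ler_wpM2l // subr_ge0 ltW.
  lra.
- rewrite ler_sqr ?nnegrE; [nra| exact: ltW | nra].
Qed.
Definition hh {R : realType} (p a : R) := a `^ (p+1) - 1 - (p+1)/p * (a `^ p - 1).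

Lemma hpt {R : realType} (p d a : R) : 1 < p -> 0 < d -> 2 * p * d < 1 -> 1 - d <= a <= 1 + d ->
  ((p + 1) / (2 * (1 + 2 * p * d) ^+ 2) * (a - 1) ^+ 2 <= hh p a) /\
  (hh p a <= (p + 1) / 2 * (1 + 2 * p * d) ^+ 2 * (a - 1) ^+ 2).
Proof.
move=> p1 d0 pd aI.
have a0 : 0 < a by move: aI => /andP[? ?]; nra.
set M := (1 + 2 * p * d) ^+ 2.
have M0 : 0 < M by rewrite /M exprn_gt0 //; nra.
split.
  have [c [c0 cI ac E]] := hcore p ((p + 1) / (2 * M)) a d p1 a0 (ltW d0) aI.
  have [_ B] := pow_bounds (p:=p) (d:=d) p1 d0 pd cI.
  have B' : M^-1 <= c `^ (p - 1) by rewrite -[M^-1]mul1r ler_pdivrMr.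
  have k2 : 2 * ((p + 1) / (2 * M)) = (p + 1) * M^-1.
    by field; rewrite gt_eqF.
  rewrite k2 in E.
  have S : 0 <= (p + 1) * c `^ (p - 1) - (p + 1) * M^-1.
    by rewrite subr_ge0 ler_wpM2l // ltW // (lt_trans ltr01) // ltrDr (lt_trans ltr01).
  have := mulr_ge0 ac S; rewrite -E /hh; lra.
have [c [c0 cI ac E]] := hcore p ((p + 1) / 2 * M) a d p1 a0 (ltW d0) aI.
have [B _] := pow_bounds (p:=p) (d:=d) p1 d0 pd cI.
have k2 : 2 * ((p + 1) / 2 * M) = (p + 1) * M by field.
rewrite k2 in E.
have S : (p + 1) * c `^ (p - 1) - (p + 1) * M <= 0.
  by rewrite subr_le0 ler_wpM2l // ltW // (lt_trans ltr01) // ltrDr (lt_trans ltr01).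
have := mulr_ge0_le0 ac S; rewrite -E /hh; lra.
Qed.
Lemma scaleE0 {R : realType} {p V a : R} : 1 < p -> 0 < V -> 0 <= a ->
  (((a * V) `^ (p+1) - V `^ (p+1)) - (p+1)/p * ((a * V) `^ p - V `^ p) * V = V `^ (p+1) * hh p a) /\
  ((a * V - V) ^+ 2 * V `^ (p - 1) = V `^ (p+1) * (a - 1) ^+ 2).
Proof.
move=> p1 V0 a0.
have p0 : 0 < p by apply: lt_trans p1.
have P1 : V `^ (p+1) = V `^ p * V.
  rewrite powRD ?powRr1 ?ltW //. by apply/implyP => _; rewrite gt_eqF.
have P2 : V `^ p = V * V `^ (p - 1) by rewrite mulr_powRB1 // ltW.
have V0' := ltW V0.
rewrite /hh !powRM // P1 P2; split; ring.
Qed.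

Lemma scaleE {R : realType} (p V v : R) : 1 < p -> 0 < V -> 0 < v ->
  ((v `^ (p+1) - V `^ (p+1)) - (p+1)/p * (v `^ p - V `^ p) * V = V `^ (p+1) * hh p (v / V)) /\
  ((v - V) ^+ 2 * V `^ (p - 1) = V `^ (p+1) * (v / V - 1) ^+ 2).
Proof.
move=> p1 V0 v0.
have vE : v = v / V * V by rewrite divfK // gt_eqF.
have a0 : 0 <= v / V by rewrite divr_ge0 // ltW.
by have := scaleE0 p1 V0 a0; rewrite -vE.
Qed.

Lemma ptw {R : realType} (p d V v : R) : 1 < p -> 0 < d -> 2 * p * d < 1 -> 0 < V ->
  `|v - V| <= d * V ->
  ((p + 1) / (2 * (1 + 2 * p * d) ^+ 2) * ((v - V) ^+ 2 * V `^ (p - 1)) <=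
     (v `^ (p+1) - V `^ (p+1)) - (p+1)/p * (v `^ p - V `^ p) * V) /\
  ((v `^ (p+1) - V `^ (p+1)) - (p+1)/p * (v `^ p - V `^ p) * V <=
     (p + 1) / 2 * (1 + 2 * p * d) ^+ 2 * ((v - V) ^+ 2 * V `^ (p - 1))).
Proof.
move=> p1 d0 pd V0; rewrite ler_norml => /andP[h1 h2].
have d1 : d < 1 by nra.
have v0 : 0 < v by nra.
have aI : 1 - d <= v / V <= 1 + d.
  apply/andP; split.
    by rewrite ler_pdivlMr //; lra.
  by rewrite ler_pdivrMr //; lra.
have [E1 E2] := scaleE p V v p1 V0 v0.
have [H1 H2] := hpt p d (v / V) p1 d0 pd aI.
have P0 : 0 <= V `^ (p + 1) by apply: powR_ge0.
rewrite E1 E2; split.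
  by rewrite mulrCA; apply: ler_wpM2l.
by rewrite [X in _ <= X]mulrCA; apply: ler_wpM2l.
Qed.


Lemma fin_ge0 {R : realType} {r : R} : 0 <= r -> ((0%R : \bar R) <= r%:E)%E.
Proof. by move=> h; change (0%:E <= r%:E)%E; rewrite lee_fin. Qed.

Theorem lemma3p2 (R : realType) (p : R) (hp : 1 < p) :
  exists cbar : R, 0 < cbar /\
  forall (d : measure_display) (T : measurableType d)
    (mu : {measure set T -> \bar R}) (Omega : set T)
    (V : T -> R) (v : R -> T -> R) (delta t0 : R),
    measurable Omega ->
    measurable_fun Omega V ->
    (forall t, t0 <= t -> measurable_fun Omega (v t)) ->
    (forall x, Omega x -> 0 < V x) ->
    0 < delta -> delta < (2 * p)^-1 ->
    (forall t, t0 <= t ->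
       {ae mu, forall x, Omega x -> (`|v t x - V x| <= delta * V x)%R}) ->
    forall t, t0 <= t ->
      (((p + 1) / (2 * (1 + cbar * delta) ^+ 2))%:E
         * Enorm mu Omega p V (fun x => (v t x - V x)%R)
       <= Ecal mu Omega p V (v t))%E /\
      (Ecal mu Omega p V (v t)
       <= ((p + 1) / 2 * (1 + cbar * delta) ^+ 2)%:E
            * Enorm mu Omega p V (fun x => (v t x - V x)%R))%E.
Proof.
have p0 : 0 < p by apply: lt_trans hp.
have p20 : 0 < 2 * p by apply: mulr_gt0.
exists (2 * p); split => //.
move=> d T mu Omega V v delta t0 mO mV mv Vpos d0 dlt H t tt0.
have pd : 2 * p * delta < 1 by move: dlt; rewrite -[(2 * p)^-1]mulr1 ltr_pdivlMl.
pose g := fun x => (v t x `^ (p+1) - V x `^ (p+1)) - (p+1)/p * (v t x `^ p - V x `^ p) * V x.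
pose F := fun x => (v t x - V x) ^+ 2 * V x `^ (p - 1).
pose A := (p + 1) / (2 * (1 + 2 * p * delta) ^+ 2).
pose B := (p + 1) / 2 * (1 + 2 * p * delta) ^+ 2.
have EnE : Enorm mu Omega p V (fun x => (v t x - V x)%R) = (\int[mu]_(x in Omega) (F x)%:E)%E by [].
have EcE : Ecal mu Omega p V (v t) = (\int[mu]_(x in Omega) (g x)%:E)%E by [].
rewrite EnE EcE -/A -/B.
have q0 : 0 < 1 + 2 * p * delta by have := mulr_gt0 p20 d0; lra.
have M0 : 0 < (1 + 2 * p * delta) ^+ 2 by rewrite exprn_gt0.
have p10 : 0 <= p + 1 by lra.
have A0 : 0 <= A by rewrite /A divr_ge0 // mulr_ge0 // ltW.
have B0 : 0 <= B by rewrite /B mulr_ge0 // ?divr_ge0 // ltW.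
have mvt := mv t tt0.
have mpow : forall (f : T -> R) r, measurable_fun Omega f -> measurable_fun Omega (fun x => f x `^ r).
  by move=> f r mf; exact: (measurableT_comp (measurable_powR r) mf).
have mF : measurable_fun Omega F.
  exact: (measurable_funM (measurable_funX 2 (measurable_funB mvt mV)) (mpow V (p - 1) mV)).
have mg : measurable_fun Omega g.
  exact: (measurable_funB (measurable_funB (mpow _ (p+1) mvt) (mpow _ (p+1) mV))
           (measurable_funM (measurable_funM (measurable_cst ((p+1)/p))
              (measurable_funB (mpow _ p mvt) (mpow _ p mV))) mV)).
have F0 : forall x, Omega x -> 0 <= F x.
  by move=> x _; rewrite /F mulr_ge0 // ?sqr_ge0 // powR_ge0.
have Hb : {ae mu, forall x, Omega x -> A * F x <= g x /\ g x <= B * F x}.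
  apply: filterS (H t tt0) => x hx Ox.
  exact: (ptw p delta (V x) (v t x) hp d0 pd (Vpos x Ox) (hx Ox)).
pose G' := fun x => Num.max (g x) 0.
have mG' : measurable_fun Omega G' by exact: (measurable_maxr mg (measurable_cst (0:R))).
have G'0 : forall x, Omega x -> 0 <= G' x by move=> x _; rewrite /G' le_max lexx orbT.
have eqG : (\int[mu]_(x in Omega) (g x)%:E = \int[mu]_(x in Omega) (G' x)%:E)%E.
  apply: ae_eq_integral => //.
  - by apply/measurable_EFinP.
  - by apply/measurable_EFinP.
  apply: filterS Hb => x hx Ox; have [h1 h2] := hx Ox.
  rewrite /G' max_l //; apply: le_trans h1; exact: mulr_ge0 A0 (F0 x Ox).
have F0E : forall x, Omega x -> (0 <= (F x)%:E)%E.
  by move=> x Ox; exact (fin_ge0 (F0 x Ox)).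
have mFE : measurable_fun Omega (fun x => (F x)%:E) by apply/measurable_EFinP.
rewrite eqG.
have G'0E : forall x, Omega x -> (0%R <= (G' x)%:E)%E.
  by move=> x Ox; exact (fin_ge0 (G'0 x Ox)).
have mG'E : measurable_fun Omega (fun x => (G' x)%:E) by apply/measurable_EFinP.
have AF0 : forall x, Omega x -> (0%R <= (A * F x)%:E)%E.
  by move=> x Ox; exact (fin_ge0 (mulr_ge0 A0 (F0 x Ox))).
have mAF : measurable_fun Omega (fun x => (A * F x)%:E).
  by apply/measurable_EFinP; exact: (measurable_funM (measurable_cst A) mF).
have BF0 : forall x, Omega x -> (0%R <= (B * F x)%:E)%E.
  by move=> x Ox; exact (fin_ge0 (mulr_ge0 B0 (F0 x Ox))).
have mBF : measurable_fun Omega (fun x => (B * F x)%:E).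
  by apply/measurable_EFinP; exact: (measurable_funM (measurable_cst B) mF).
split.
  have e1 : (\int[mu]_(x in Omega) (A%:E * (F x)%:E) = \int[mu]_(x in Omega) (A * F x)%:E)%E.
    by apply: eq_integral => x _; rewrite EFinM.
  rewrite -(ge0_integralZl_EFin mu mO F0E mFE A0) e1.
  apply: (ae_ge0_le_integral mO AF0 mAF G'0E mG'E).
  apply: filterS Hb => x hx Ox; have [h1 h2] := hx Ox.
  rewrite lee_fin /G'; apply: le_trans h1 _; by rewrite le_max lexx.
have e1 : (\int[mu]_(x in Omega) (B%:E * (F x)%:E) = \int[mu]_(x in Omega) (B * F x)%:E)%E.
  by apply: eq_integral => x _; rewrite EFinM.
rewrite -(ge0_integralZl_EFin mu mO F0E mFE B0) e1.
apply: (ae_ge0_le_integral mO G'0E mG'E BF0 mBF).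
apply: filterS Hb => x hx Ox; have [h1 h2] := hx Ox.
rewrite lee_fin /G' max_l //; apply: le_trans h1; exact: mulr_ge0 A0 (F0 x Ox).
Qed.
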